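(* Let $B$ be a Noetherian ring, $\varphi\in B^{m\times n}$ with $m\le n$, $1\le t\le m$, and $S=B/I_t(\varphi)$. Let $\varphi'\in B^{m\times(t-1)}$ be the submatrix of the first $t-1$ columns, $\varphi''\in B^{(t-1)\times n}$ the submatrix of the first $t-1$ rows, and $\Delta=\det(\delta)$ where $\delta\in B^{(t-1)\times(t-1)}$ is the upper-left $(t-1)\times(t-1)$ submatrix of $\varphi$. Then $I_{t-1}(\varphi')\cdot I_{t-1}(\varphi'')S\subset\Delta S$.
   Context: $I_k(\psi)$ denotes the ideal generated by the $k\times k$ minors of a matrix $\psi$ (with $I_0=B$). *)

(* Defs.v *)
From HB Require Import structures.
From mathcomp Require Import all_boot all_order all_algebra.
Set Implicit Arguments. Unset Strict Implicit. Unset Printing Implicit Defensive.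
Import GRing.Theory.
Local Open Scope ring_scope.

Section IdealDefs.
Variable R : comNzRingType.

Definition in_ideal_gen (G : R -> Prop) (x : R) : Prop :=
  exists (k : nat) (r g : 'I_k -> R),
    (forall i, G (g i)) /\ x = \sum_(i < k) r i * g i.

Definition is_ideal (I : R -> Prop) : Prop :=
  [/\ I 0, (forall x y, I x -> I y -> I (x + y)) & (forall r x, I x -> I (r * x))].

Definition noetherian_ring : Prop :=
  forall I : R -> Prop, is_ideal I ->
    exists (k : nat) (g : 'I_k -> R),
      forall x, I x <-> in_ideal_gen (fun y => exists i, y = g i) x.

Definition in_ideal_prod (I J : R -> Prop) (x : R) : Prop :=
  in_ideal_gen (fun y => exists a b, [/\ I a, J b & y = a * b]) x.

Definition is_minor (m n k : nat) (A : 'M[R]_(m, n)) (x : R) : Prop :=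
  exists (f : 'I_k -> 'I_m) (g : 'I_k -> 'I_n),
    {homo f : i j / (i < j)%N} /\ {homo g : i j / (i < j)%N} /\
    x = \det (\matrix_(i < k, j < k) A (f i) (g j)).

(* I_k(A): ideal generated by the k x k minors (I_0(A) = R since the empty
   determinant is 1) *)
Definition minor_ideal (m n k : nat) (A : 'M[R]_(m, n)) (x : R) : Prop :=
  in_ideal_gen (is_minor k A) x.

Definition first_cols (m n k : nat) (hk : (k <= n)%N) (A : 'M[R]_(m, n))
  : 'M[R]_(m, k) := \matrix_(i < m, j < k) A i (widen_ord hk j).
Definition first_rows (m n k : nat) (hk : (k <= m)%N) (A : 'M[R]_(m, n))
  : 'M[R]_(k, n) := \matrix_(i < k, j < n) A (widen_ord hk i) j.

End IdealDefs.

Lemma pred_le_trans (t m : nat) : (t <= m)%N -> (t.-1 <= m)%N.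
Proof. by move=> h; apply: leq_trans h; apply: leq_pred. Qed.

Lemma pred_le_trans2 (t m n : nat) : (t <= m)%N -> (m <= n)%N -> (t.-1 <= n)%N.
Proof. by move=> h1 h2; apply: pred_le_trans; apply: leq_trans h2. Qed.

(* Main.v *)
Require Import Defs.
From HB Require Import structures.
From mathcomp Require Import all_boot all_order all_algebra all_fingroup.
From mathcomp Require Import ring zify.
Set Implicit Arguments. Unset Strict Implicit. Unset Printing Implicit Defensive.
Import GRing.Theory.
Local Open Scope ring_scope.

Section Ideals.
Variable R : comNzRingType.
Implicit Types (G : R -> Prop).

Definition idl (P : R -> Prop) :=
  [/\ P 0, (forall x y, P x -> P y -> P (x + y)) & (forall r x, P x -> P (r * x))].

Lemma idl_sum (P : R -> Prop) k (F : 'I_k -> R) :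
  idl P -> (forall i, P (F i)) -> P (\sum_(i < k) F i).
Proof.
case=> P0 PD PM HF; elim: k F HF => [|k IH] F HF; first by rewrite big_ord0.
by rewrite big_ord_recr /=; apply: PD; [apply: IH => i|].
Qed.

Lemma idl_gen (P : R -> Prop) G x :
  idl P -> (forall y, G y -> P y) -> in_ideal_gen G x -> P x.
Proof.
move=> hP hG [k [r [g [Hg ->]]]]; apply: idl_sum => // i.
by case: hP => _ _ PM; apply: PM; apply: hG.
Qed.

Lemma gen_idl G : idl (in_ideal_gen G).
Proof.
split.
- exists 0%N, (fun _ => 0), (fun _ => 0); split; first by case.
  by rewrite big_ord0.
- move=> x y [k1 [r1 [g1 [H1 ->]]]] [k2 [r2 [g2 [H2 ->]]]].
  exists (k1 + k2)%N, (fun i => match split i with inl a => r1 a | inr b => r2 b end),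
    (fun i => match split i with inl a => g1 a | inr b => g2 b end); split.
    by move=> i; case: (split i).
  by rewrite big_split_ord /=; congr (_ + _); apply: eq_bigr => i _;
    rewrite (unsplitK (inl _ _)) || rewrite (unsplitK (inr _ _)).
- move=> c x [k [r [g [H ->]]]]; exists k, (fun i => c * r i), g; split => //.
  by rewrite mulr_sumr; apply: eq_bigr => i _; rewrite mulrA.
Qed.

Lemma gen_in G x : G x -> in_ideal_gen G x.
Proof.
move=> Gx; exists 1%N, (fun _ => 1), (fun _ => x); split => //.
by rewrite big_ord1 mul1r.
Qed.

Lemma gen_mono G G' x : (forall y, G y -> in_ideal_gen G' y) ->
  in_ideal_gen G x -> in_ideal_gen G' x.
Proof. by move=> h; apply: idl_gen => //; apply: gen_idl. Qed.

Lemma gen0 G : in_ideal_gen G 0.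
Proof. by case: (gen_idl G). Qed.
Lemma genD G x y : in_ideal_gen G x -> in_ideal_gen G y -> in_ideal_gen G (x + y).
Proof. by case: (gen_idl G) => _ h _; apply: h. Qed.
Lemma genM G r x : in_ideal_gen G x -> in_ideal_gen G (r * x).
Proof. by case: (gen_idl G) => _ _ h; apply: h. Qed.
Lemma genN G x : in_ideal_gen G x -> in_ideal_gen G (- x).
Proof. by move=> h; rewrite -mulN1r; apply: genM. Qed.
Lemma genB G x y : in_ideal_gen G x -> in_ideal_gen G y -> in_ideal_gen G (x - y).
Proof. by move=> hx hy; apply: genD => //; apply: genN. Qed.
Lemma gen_sum G k (F : 'I_k -> R) : (forall i, in_ideal_gen G (F i)) ->
  in_ideal_gen G (\sum_(i < k) F i).
Proof. by apply: idl_sum; apply: gen_idl. Qed.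

End Ideals.

Lemma card_lift s (U : pred 'I_s.+1) r :
  #|U| = (U r + #|[pred i : 'I_s | U (lift r i)]|)%N.
Proof.
rewrite -!sum1_card !(big_mkcond (fun i => i \in _)) /=.
by rewrite (bigD1_ord r) //=; congr (_ + _)%N.
Qed.

Section L2.
Variables (R : comNzRingType) (m n : nat) (phi : 'M[R]_(m, n)).

Definition gmin K (x : R) := exists (f : 'I_K -> 'I_m) (g : 'I_K -> 'I_n),
  x = \det (\matrix_(i < K, j < K) phi (f i) (g j)).

Lemma L2 K s (A : 'M[R]_s) (U : pred 'I_s) (rf : 'I_s -> 'I_m) (cg : 'I_s -> 'I_n) :
  (K <= #|U|)%N -> (forall i, U i -> forall j, A i j = phi (rf i) (cg j)) ->
  in_ideal_gen (gmin K) (\det A).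
Proof.
elim: s A U rf cg => [|s IH] A U rf cg hK hA.
  have mc := max_card (mem U); rewrite card_ord in mc.
  have K0 : K = 0%N by apply/eqP; rewrite -leqn0 (leq_trans hK).
  subst K; apply: gen_in; exists (fun i => rf i), (fun i => cg i).
  by rewrite !det_mx00.
have mc := max_card (mem U); rewrite card_ord in mc.
case: (leqP s.+1 K) => hs.
  have eK : K = s.+1 by apply/eqP; rewrite eqn_leq hs (leq_trans hK).
  subst K.
  have allU : forall i, U i.
    move=> i; apply/negPn/negP => nU.
    have := cardC U; rewrite card_ord => hc.
    have : #|U| = s.+1 by apply/eqP; rewrite eqn_leq hK mc.
    move=> eU; rewrite eU in hc.
    have h0 : #|[predC U]| = 0%N by apply/eqP; rewrite -(eqn_add2l s.+1) addn0 hc.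
    by have := card0_eq h0 i; rewrite !inE /= unfold_in /= nU.
  apply: gen_in; exists rf, cg; congr (\det _); apply/matrixP => i j.
  by rewrite mxE hA.
have [r nUr | allU] := pickP [pred i | ~~ U i].
  rewrite (expand_det_row _ r); apply: gen_sum => j; apply: genM.
  rewrite /cofactor; apply: genM.
  apply: (IH _ [pred i | U (lift r i)] (fun i => rf (lift r i)) (fun i => cg (lift j i))).
    by move: hK; rewrite (card_lift U r) /=; move: nUr; rewrite /= => /negbTE ->.
  by move=> i Ui j'; rewrite !mxE; apply: hA.
rewrite (expand_det_row _ ord0); apply: gen_sum => j; apply: genM.
rewrite /cofactor; apply: genM.
apply: (IH _ [pred i | U (lift ord0 i)] (fun i => rf (lift ord0 i)) (fun i => cg (lift j i))).
  have -> : #|[pred i : 'I_s | U (lift ord0 i)]| = #|'I_s|.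
    apply: eq_card => i; rewrite !unfold_in /=.
    by have := allU (lift ord0 i); rewrite /= => /negbFE ->.
  by rewrite card_ord -ltnS.
by move=> i Ui j'; rewrite !mxE; apply: hA.
Qed.

End L2.

Lemma sort_fun K m (f : 'I_K -> 'I_m) : injective f ->
  exists (h : 'I_K -> 'I_m) (s : 'S_K),
    {homo h : i j / (i < j)%N} /\ forall i, f i = h (s i).
Proof.
move=> finj.
pose le := fun a b : 'I_m => (a <= b)%N.
pose sq := sort le [seq f i | i <- enum 'I_K].
have szs : size sq = K by rewrite size_sort size_map size_enum_ord.
have uqs : uniq sq by rewrite sort_uniq map_inj_uniq ?enum_uniq.
have sts : sorted le sq by apply: sort_sorted => a b; apply: leq_total.
have memf : forall i, f i \in sq by move=> i; rewrite mem_sort map_f ?mem_enum.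
have sig_lt : forall i, (index (f i) sq < K)%N by move=> i; rewrite -szs index_mem.
pose sg := fun i => Ordinal (sig_lt i).
have sg_inj : injective sg.
  move=> i j /(congr1 val) /= eij; apply: finj.
  by rewrite -(nth_index (f i) (memf i)) eij nth_index.
exists (fun i => nth (f i) sq i), (perm sg_inj); split.
  move=> i j lij.
  have hi : (i < size sq)%N by rewrite szs.
  have hj : (j < size sq)%N by rewrite szs.
  rewrite (set_nth_default (f i) (f j) hj).
  have le_ij : le (nth (f i) sq i) (nth (f i) sq j).
    apply: (sorted_ltn_nth (leT := le)) => //.
    by move=> a b c; apply: leq_trans.
  rewrite /le in le_ij; rewrite ltn_neqAle le_ij andbT.
  by rewrite (inj_eq val_inj) (nth_uniq _ hi hj uqs) neq_ltn lij.
move=> i; rewrite permE /=.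
by rewrite nth_index.
Qed.

Lemma det_row_perm (R : comNzRingType) K (s : 'S_K) (A : 'M[R]_K) :
  \det (row_perm s A) = (-1) ^+ s * \det A.
Proof. by rewrite row_permE det_mulmx det_perm. Qed.

Lemma det_col_perm (R : comNzRingType) K (s : 'S_K) (A : 'M[R]_K) :
  \det (col_perm s A) = (-1) ^+ s * \det A.
Proof. by rewrite col_permE det_mulmx det_perm odd_permV mulrC. Qed.

Lemma gmin_minor (R : comNzRingType) m n (phi : 'M[R]_(m, n)) K x :
  gmin phi K x -> minor_ideal K phi x.
Proof.
move=> [f [g ->]].
case: (boolP (injectiveb f)) => [/injectiveP finj|/injectivePn [i [j nij eij]]]; last first.
  rewrite (determinant_alternate nij); first exact: gen0.
  by move=> c; rewrite !mxE eij.
case: (boolP (injectiveb g)) => [/injectiveP ginj|/injectivePn [i [j nij eij]]]; last first.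
  rewrite -det_tr (determinant_alternate nij); first exact: gen0.
  by move=> c; rewrite !mxE eij.
have [h [s [hh hs]]] := sort_fun finj.
have [h' [s' [hh' hs']]] := sort_fun ginj.
have -> : \matrix_(i < K, j < K) phi (f i) (g j) =
   row_perm s (col_perm s' (\matrix_(i < K, j < K) phi (h i) (h' j))).
  by apply/matrixP => i j; rewrite !mxE hs hs'.
rewrite det_row_perm det_col_perm; do 2! apply: genM.
by apply: gen_in; exists h, h'; split.
Qed.
Lemma telescope (R : comNzRingType) (z : nat -> R) k :
  \sum_(j < k) (-1) ^+ j * (z j + z j.+1) = z 0%N - (-1) ^+ k * z k.
Proof.
elim: k => [|kk IH]; first by rewrite big_ord0 expr0 mul1r subrr.
rewrite big_ord_recr /= IH exprS; ring.
Qed.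

Section Block.
Variables (R : comNzRingType) (k : nat) (dl be al ga : 'M[R]_k).

Definition Ub := row_mx dl be.
Definition Mj (j : nat) : 'M[R]_(k, k + k) := \matrix_(l, c)
  (if (l < j)%N then row_mx 0 ga l c else if (l == j :> nat) then row_mx al ga l c
   else row_mx al 0 l c).
Definition Zj (j : nat) : 'M[R]_(k, k + k) := \matrix_(l, c)
  (if (l < j)%N then row_mx 0 ga l c else row_mx al 0 l c).

Lemma dz j (hj : (j < k)%N) :
  \det (col_mx Ub (Mj j)) = \det (col_mx Ub (Zj j)) + \det (col_mx Ub (Zj j.+1)).
Proof.
rewrite -[\det (col_mx Ub (Zj j))]mul1r -[\det (col_mx Ub (Zj j.+1))]mul1r.
apply: (determinant_multilinear (i0 := rshift k (Ordinal hj))).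
- apply/matrixP => i c; rewrite !mxE !(unsplitK (inr _ _)) !mxE /= ltnn eqxx ltnSn !mul1r.
  by case: (split c) => p; rewrite !mxE ?addr0 ?add0r.
- apply/matrixP => i c; rewrite [LHS]mxE [RHS]mxE.
  case: (split_ordP (lift (rshift k (Ordinal hj)) i)) => [p e|l e]; rewrite e.
    by rewrite !col_mxEu.
  rewrite !col_mxEd !mxE.
  have nl : (l != j :> nat).
    apply/negP => /eqP elj; have := neq_lift (rshift k (Ordinal hj)) i.
    by rewrite e; apply/negP/negPn/eqP; apply: val_inj; rewrite /= elj.
  by rewrite (negbTE nl); case: ltngtP nl => // _ _; rewrite ?ltnS ?ltnW //.
- apply/matrixP => i c; rewrite [LHS]mxE [RHS]mxE.
  case: (split_ordP (lift (rshift k (Ordinal hj)) i)) => [p e|l e]; rewrite e.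
    by rewrite !col_mxEu.
  rewrite !col_mxEd !mxE.
  have nl : (l != j :> nat).
    apply/negP => /eqP elj; have := neq_lift (rshift k (Ordinal hj)) i.
    by rewrite e; apply/negP/negPn/eqP; apply: val_inj; rewrite /= elj.
  rewrite (negbTE nl) ltnS leq_eqVlt (negbTE nl) /=.
  by case: ltngtP nl.
Qed.


Lemma Zj0 : Zj 0 = row_mx al 0.
Proof.
apply/matrixP => l c; rewrite [LHS]mxE /=.
done.
Qed.

Lemma Zjk : Zj k = row_mx 0 ga.
Proof.
by apply/matrixP => l c; rewrite [LHS]mxE ltn_ord.
Qed.

Definition Jm : 'M[R]_(k + k) := block_mx 0 1%:M 1%:M 0.

Lemma z0E : \det (col_mx Ub (Zj 0)) = \det be * \det al * \det Jm.
Proof.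
rewrite Zj0 /Ub -/(block_mx dl be al 0).
have -> : block_mx dl be al 0 = block_mx be dl 0 al *m Jm.
  by rewrite /Jm mulmx_block !mulmx0 !mulmx1 ?mul0mx !addr0 !add0r.
by rewrite det_mulmx det_ublock.
Qed.

Lemma zkE : \det (col_mx Ub (Zj k)) = \det dl * \det ga.
Proof. by rewrite Zjk /Ub -/(block_mx dl be 0 ga) det_ublock. Qed.

Lemma block_identity :
  \sum_(j < k) (-1) ^+ j * \det (col_mx Ub (Mj j)) =
  \det be * \det al * \det Jm - (-1) ^+ k * (\det dl * \det ga).
Proof.
rewrite -z0E -zkE.
have -> : \sum_(j < k) (-1) ^+ j * \det (col_mx Ub (Mj j)) =
  \sum_(j < k) (-1) ^+ j * (\det (col_mx Ub (Zj j)) + \det (col_mx Ub (Zj j.+1))).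
  by apply: eq_bigr => j _; rewrite dz.
exact: (telescope (fun j => \det (col_mx Ub (Zj j)))).
Qed.

End Block.

Lemma detJ (R : comNzRingType) k : \det (Jm R k) = (-1) ^+ k.
Proof.
have := block_identity (1%:M : 'M[R]_k) 1%:M 1%:M 1%:M.
rewrite big1 ?det1 ?mul1r.
  move=> h; apply/eqP; rewrite -subr_eq0 -(mulr1 ((-1) ^+ k)) -h //.
move=> j _.
rewrite (determinant_alternate (i1 := lshift k j) (i2 := rshift k j)).
- by rewrite mulr0.
- apply/negP => /eqP /(congr1 val) /= e; have := ltn_ord j; move: e; lia.
- move=> c; rewrite col_mxEu col_mxEd /Mj /Ub [RHS]mxE ltnn eqxx mxE.
  done.
Qed.

Lemma block_final (R : comNzRingType) k (dl be al ga : 'M[R]_k) :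
  \sum_(j < k) (-1) ^+ j * \det (col_mx (Ub dl be) (Mj al ga j)) =
  (-1) ^+ k * (\det al * \det be - \det dl * \det ga).
Proof. rewrite block_identity detJ; ring. Qed.

Section MinorRel.
Variables (R : comNzRingType) (m n k : nat) (phi : 'M[R]_(m, n)).
Variables (pr fr : 'I_k -> 'I_m) (qc gc : 'I_k -> 'I_n).

Let sub (f : 'I_k -> 'I_m) (g : 'I_k -> 'I_n) : 'M[R]_k :=
  \matrix_(i, j) phi (f i) (g j).

Lemma dj_in (j : 'I_k) :
  in_ideal_gen (gmin phi k.+1)
    (\det (col_mx (Ub (sub pr qc) (sub pr gc)) (Mj (sub fr qc) (sub fr gc) j))).
Proof.
pose rf := fun i : 'I_(k + k) => match split i with inl p => pr p | inr l => fr l end.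
pose cg := fun i : 'I_(k + k) => match split i with inl p => qc p | inr l => gc l end.
pose U := [pred i : 'I_(k + k) | match split i with inl _ => true | inr l => l == j end].
apply: (@L2 _ _ _ phi k.+1 _ _ U rf cg).
  rewrite -sum1_card (big_mkcond (fun i => i \in _)) /= big_split_ord /=.
  have -> : \sum_(i < k) (if lshift k i \in U then 1 else 0) = k.
    rewrite -[RHS](card_ord k) -sum1_card; apply: eq_bigr => i _.
    by rewrite unfold_in /U /= (unsplitK (inl _ _)).
  have -> : \sum_(i < k) (if rshift k i \in U then 1 else 0) = 1%N.
    rewrite (bigD1 j) //= big1 ?addn0; first by rewrite unfold_in /U /= (unsplitK (inr _ _)) eqxx.
    by move=> i nij; rewrite unfold_in /U /= (unsplitK (inr _ _)) (negbTE nij).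
  by rewrite addn1.
move=> i; rewrite /U /= /rf /cg; case: (split_ordP i) => [p ->|l ->].
  move=> _ c; rewrite col_mxEu /Ub.
  by case: (split_ordP c) => [q ->|q ->]; rewrite ?row_mxEl ?row_mxEr !mxE
    ?(unsplitK (inl _ _)) ?(unsplitK (inr _ _)).
rewrite ?(unsplitK (inr _ _)) => /eqP -> c; rewrite col_mxEd /Mj mxE ltnn eqxx.
by case: (split_ordP c) => [q ->|q ->]; rewrite ?row_mxEl ?row_mxEr !mxE
    ?(unsplitK (inl _ _)) ?(unsplitK (inr _ _)).
Qed.

Lemma minor_rel :
  in_ideal_gen (gmin phi k.+1)
    (\det (sub pr qc) * \det (sub fr gc) - \det (sub fr qc) * \det (sub pr gc)).
Proof.
have h := block_final (sub pr qc) (sub pr gc) (sub fr qc) (sub fr gc).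
have hs : in_ideal_gen (gmin phi k.+1)
   (\sum_(j < k) (-1) ^+ j *
     \det (col_mx (Ub (sub pr qc) (sub pr gc)) (Mj (sub fr qc) (sub fr gc) j))).
  by apply: gen_sum => j; apply: genM; apply: dj_in.
rewrite h in hs; have := genM ((-1) ^+ k) hs.
rewrite mulrA -expr2 sqrr_sign mul1r => h2.
rewrite -opprB; apply: genN.
exact: h2.
Qed.

End MinorRel.
Lemma incr_gap k (g : 'I_k -> 'I_k) : {homo g : i j / (i < j)%N} ->
  forall d (i j : 'I_k), j = (i + d)%N :> nat -> (g i + d <= g j)%N.
Proof.
move=> hg; elim=> [|d IH] i j e.
  by rewrite addn0; have -> : j = i by apply: val_inj; rewrite /= e addn0.
have hj' : (i + d < k)%N by have := ltn_ord j; rewrite e; lia.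
have := IH i (Ordinal hj') erefl.
have : (g (Ordinal hj') < g j)%N by apply: hg; rewrite /= e; lia.
lia.
Qed.

Lemma incr_id k (g : 'I_k -> 'I_k) : {homo g : i j / (i < j)%N} -> forall i, g i = i.
Proof.
move=> hg i; apply: val_inj => /=.
have k0 : (0 < k)%N by apply: leq_ltn_trans (ltn_ord i).
have h1 := @incr_gap k g hg (nat_of_ord i) (Ordinal k0) i erefl.
have hl : (k.-1 < k)%N by lia.
have h2 := @incr_gap k g hg (k.-1 - i)%N i (Ordinal hl).
have := h2 ltac:(rewrite /=; have := ltn_ord i; lia).
have := ltn_ord (g (Ordinal hl)); move: h1; lia.
Qed.

Theorem lemma3p2 (B : comNzRingType) (m n t : nat) (phi : 'M[B]_(m, n))
  (hBnoeth : noetherian_ring B)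
  (hmn : (m <= n)%N) (ht1 : (1 <= t)%N) (htm : (t <= m)%N) :
  let phi' := first_cols (pred_le_trans2 htm hmn) phi in
  let phi'' := first_rows (pred_le_trans htm) phi in
  let delta := first_cols (pred_le_trans2 htm hmn) phi'' in
  let Delta := \det delta in
  forall x : B,
    in_ideal_prod (minor_ideal t.-1 phi') (minor_ideal t.-1 phi'') x ->
    exists (y z : B), minor_ideal t phi z /\ x = Delta * y + z.
Proof.
move=> phi' phi'' delta Delta x hx.
have Et : t.-1.+1 = t by rewrite prednK.
pose Good := fun x : B => exists y z : B, minor_ideal t phi z /\ x = Delta * y + z.
have gI : idl Good.
  split.
  - by exists 0, 0; split; [exact: gen0 | rewrite mulr0 addr0].
  - move=> x1 x2 [y1 [z1 [h1 ->]]] [y2 [z2 [h2 ->]]].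
    exists (y1 + y2), (z1 + z2); split; first exact: genD.
    by rewrite mulrDr addrACA.
  - move=> r x1 [y1 [z1 [h1 ->]]]; exists (r * y1), (r * z1); split; first exact: genM.
    by rewrite mulrDr mulrCA.
have core : forall a b, is_minor t.-1 phi' a -> is_minor t.-1 phi'' b -> Good (a * b).
  move=> a b [f [g [hf [hg ->]]]] [f' [g' [hf' [hg' ->]]]].
  have gid := @incr_id t.-1 g hg.
  have fid := @incr_id t.-1 f' hf'.
  pose pr := widen_ord (pred_le_trans htm).
  pose qc := widen_ord (pred_le_trans2 htm hmn).
  have hr := minor_rel phi pr f qc g'.
  have e1 : \matrix_(i, j) phi (pr i) (qc j) = delta.
    by apply/matrixP => i j; rewrite !mxE.
  have e2 : \matrix_(i, j) phi (f i) (qc j) = \matrix_(i < t.-1, j < t.-1) phi' (f i) (g j).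
    by apply/matrixP => i j; rewrite !mxE gid.
  have e3 : \matrix_(i, j) phi (pr i) (g' j) = \matrix_(i < t.-1, j < t.-1) phi'' (f' i) (g' j).
    by apply/matrixP => i j; rewrite !mxE fid.
  rewrite e1 e2 e3 in hr.
  exists (\det (\matrix_(i, j) phi (f i) (g' j))).
  exists (- (\det delta * \det (\matrix_(i, j) phi (f i) (g' j)) -
       \det (\matrix_(i, j) phi' (f i) (g j)) *
       \det (\matrix_(i, j) phi'' (f' i) (g' j)))); split; last first.
    by rewrite opprB addrC subrK.
  have H := genN (gen_mono (@gmin_minor _ _ _ phi _) hr).
  by rewrite Et in H.
apply: (idl_gen (P := Good)) hx => //.
move=> y [a [b [ha hb ->]]].
have Pa : idl (fun a => forall b, minor_ideal t.-1 phi'' b -> Good (a * b)).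
  case: gI => G0 GD GM; split.
  - by move=> b0 _; rewrite mul0r.
  - by move=> a1 a2 h1 h2 b0 hb0; rewrite mulrDl; apply: GD; [apply: h1|apply: h2].
  - by move=> r a1 h1 b0 hb0; rewrite -mulrA; apply: GM; apply: h1.
apply: (idl_gen Pa _ ha) => // a0 ma0 b0 hb0.
have Pb : idl (fun b => Good (a0 * b)).
  case: gI => G0 GD GM; split.
  - by rewrite mulr0.
  - by move=> b1 b2 h1 h2; rewrite mulrDr; apply: GD.
  - by move=> r b1 h1; rewrite mulrCA; apply: GM.
by apply: (idl_gen Pb _ hb0) => b1 mb1; apply: core.
Qed.
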